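(* In the setting below, the natural homomorphism $W(E_7)\to O(A_{L_+})$ is surjective. Moreover, the action of $O(A_{L_+})$ on $A_{L_+}$ is transitive on each of the sets $C_1=\{x: q_{L_+}(x)=-1/2\}$ and $C_2=\{x:q_{L_+}(x)=1/2\}$, and has exactly two orbits on each of the sets $C_3=\{x:q_{L_+}(x)=1\}$ and $C_4=\{x:q_{L_+}(x)=0\}$.
   Context: Let $C\subset\mathbb P^2$ be a smooth plane quartic $\{f=0\}$, $X_C=\{t^4=f\}\subset\mathbb P^3$ (a $K3$ surface), $\tau(x:y:z:t)=(x:y:z:-t)$, $S_C=X_C/\langle\tau\rangle$ (a Del Pezzo surface of degree 2, the blow-up of $\mathbb P^2$ in seven points, with $Pic(S_C)$ having basis $e_0,\dots,e_7$: $e_0$ the pull-back of a line, $e_i$ the exceptional curves; canonical class $k=-3e_0+e_1+\dots+e_7$), and $\pi_2:X_C\to S_C$ the quotient map. Let $L_+=\{x\in H^2(X_C,\mathbb Z):\tau^*x=x\}$, which equals $\pi_2^*Pic(S_C)$. $A_{L_+}=L_+^*/L_+\cong(\mathbb Z/2)^8$ is the discriminant group with discriminant quadratic form $q_{L_+}:A_{L_+}\to\mathbb Q/2\mathbb Z$, $q(x+L_+)=(x,x)\bmod 2\mathbb Z$, and $O(A_{L_+})$ is the group of automorphisms of $A_{L_+}$ preserving $q_{L_+}$. The Weyl group $W(E_7)$ of the root lattice $k^\perp\subset Pic(S_C)$ acts on $Pic(S_C)$ fixing $k$, hence on $L_+$ by pull-back, and thus on $A_{L_+}$. *)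

(* Defs.v *)
From mathcomp Require Import all_boot all_order all_algebra.
Set Implicit Arguments. Unset Strict Implicit. Unset Printing Implicit Defensive.
Import GRing.Theory Num.Theory.
Local Open Scope ring_scope.

(* Pic(S_C) = Z e_0 + ... + Z e_7, with (e_0,e_0)=1, (e_i,e_i)=-1 (i>=1),
   orthogonal basis.  A class is its coordinate row vector. *)
Definition Pic := 'rV[int]_8.

Definition bilP (x y : Pic) : int :=
  \sum_(i < 8) (if nat_of_ord i == 0%N then 1 else -1) * (x 0 i * y 0 i).

Definition kcan : Pic := \row_(i < 8) (if nat_of_ord i == 0%N then -3 else 1).

Definition is_root (r : Pic) : Prop := bilP r r = -2 /\ bilP r kcan = 0.

Definition refl (r x : Pic) : Pic := x + (bilP x r) *: r.

(* the element s_{r_1} o ... o s_{r_n} of W(E_7) acting on Pic *)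
Definition wact (rs : seq Pic) (x : Pic) : Pic := foldr refl x rs.

(* L_+ = pi_2^* Pic(S_C); pull-back by the degree 2 map multiplies the form by 2 *)
Definition bilL (x y : Pic) : int := 2 * bilP x y.

(* Since L_+ ~ Pic(2) with unimodular Pic, L_+^* = (1/2) L_+, and
   A_{L_+} = L_+^*/L_+ ~ L_+/2L_+; a : AL stands for the class of (1/2) pi_2^* (lift a). *)
Definition AL := 'rV['Z_2]_8.

Definition liftA (a : AL) : Pic := \row_(i < 8) ((nat_of_ord (a 0 i))%:Z).
Definition redA (v : Pic) : AL := \row_(i < 8) ((v 0 i)%:~R).

(* q_{L_+}((1/2) x) = (x,x)_{L_+}/4, a rational number, taken mod 2Z *)
Definition qL (a : AL) : rat := (bilL (liftA a) (liftA a))%:~R / 4%:R.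

Definition eqmod2Z (u v : rat) : Prop := exists k : int, u - v = 2%:R * k%:~R.

Definition OA (f : AL -> AL) : Prop :=
  bijective f /\ {morph f : x y / x + y} /\ (forall x, eqmod2Z (qL (f x)) (qL x)).

Definition Wind (rs : seq Pic) (a : AL) : AL := redA (wact rs (liftA a)).

Definition Cset (c : rat) (x : AL) : Prop := eqmod2Z (qL x) c.

Definition transitive_on (P : AL -> Prop) : Prop :=
  forall x y, P x -> P y -> exists f, OA f /\ f x = y.

Definition exactly_two_orbits (P : AL -> Prop) : Prop :=
  exists x1 x2, [/\ P x1, P x2, ~ (exists f, OA f /\ f x1 = x2) &
    forall z, P z -> exists f, OA f /\ (f x1 = z \/ f x2 = z)].

(* Main.v *)
Require Import Defs.
From mathcomp Require Import all_boot all_order all_algebra.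
From mathcomp Require Import ring.
Set Implicit Arguments. Unset Strict Implicit. Unset Printing Implicit Defensive.
Import GRing.Theory Num.Theory.
Local Open Scope ring_scope.

Lemma bilP_sym x y : bilP x y = bilP y x.
Proof. by apply: eq_bigr => i _; rewrite (mulrC (x 0 i)). Qed.

Lemma bilP_addl x y z : bilP (x + y) z = bilP x z + bilP y z.
Proof. by rewrite /bilP -big_split; apply: eq_bigr => i _; rewrite !mxE mulrDl mulrDr. Qed.

Lemma bilP_scalel c x z : bilP (c *: x) z = c * bilP x z.
Proof. rewrite /bilP mulr_sumr; apply: eq_bigr => i _; rewrite !mxE; ring. Qed.

Lemma bilP_addr x y z : bilP z (x + y) = bilP z x + bilP z y.
Proof. by rewrite !(bilP_sym z) bilP_addl. Qed.

Lemma bilP_scaler c x z : bilP z (c *: x) = c * bilP z x.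
Proof. by rewrite !(bilP_sym z) bilP_scalel. Qed.

Lemma refl_add r x y : refl r (x + y) = refl r x + refl r y.
Proof. rewrite /refl bilP_addl scalerDl; by rewrite addrACA. Qed.

Lemma refl_scale r c x : refl r (c *: x) = c *: refl r x.
Proof. by rewrite /refl bilP_scalel scalerDr scalerA. Qed.

Lemma wact_add rs x y : wact rs (x + y) = wact rs x + wact rs y.
Proof. by elim: rs => //= r rs IH; rewrite IH refl_add. Qed.

Lemma wact_scale rs c x : wact rs (c *: x) = c *: wact rs x.
Proof. by elim: rs => //= r rs IH; rewrite IH refl_scale. Qed.

Lemma refl_iso r x y : bilP r r = -2 -> bilP (refl r x) (refl r y) = bilP x y.
Proof.
move=> Hr; rewrite /refl bilP_addl !bilP_addr !bilP_scalel !bilP_scaler Hr.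
rewrite (bilP_sym r y); ring.
Qed.

Lemma refl_invol r x : bilP r r = -2 -> refl r (refl r x) = x.
Proof.
move=> Hr; rewrite /refl bilP_addl bilP_scalel Hr.
rewrite -addrA -scalerDl.
have -> : bilP x r + (bilP x r + bilP x r * -2) = 0 by ring.
by rewrite scale0r addr0.
Qed.

Definition rootsP (rs : seq Pic) := forall r, r \in rs -> bilP r r = -2.

Lemma wact_iso rs x y : rootsP rs -> bilP (wact rs x) (wact rs y) = bilP x y.
Proof.
elim: rs => //= r rs IH H; rewrite refl_iso ?IH //.
  by move=> s Hs; apply: H; rewrite inE Hs orbT.
by apply: H; rewrite inE eqxx.
Qed.

Lemma wact_cat s1 s2 x : wact (s1 ++ s2) x = wact s1 (wact s2 x).
Proof. by rewrite /wact foldr_cat. Qed.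

Lemma wact_inv rs x : rootsP rs -> wact (rev rs) (wact rs x) = x.
Proof.
elim: rs x => //= r rs IH x H.
rewrite rev_cons -cats1 wact_cat /= refl_invol; last by apply: H; rewrite inE eqxx.
by apply: IH => s Hs; apply: H; rewrite inE Hs orbT.
Qed.

Lemma rootsP_rev rs : rootsP rs -> rootsP (rev rs).
Proof. by move=> H r; rewrite mem_rev; apply: H. Qed.

Lemma rootsP_cat s1 s2 : rootsP s1 -> rootsP s2 -> rootsP (s1 ++ s2).
Proof. by move=> H1 H2 r; rewrite mem_cat => /orP [] ?; [apply: H1|apply: H2]. Qed.

Lemma Z2nat n : (n%:R : 'Z_2) = (odd n)%:R.
Proof.
elim: n => // n IH; rewrite mulrS IH /=.
by case: (odd n); apply/val_inj.
Qed.

Definition oddz (z : int) : bool := odd `|z|%N.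

Lemma Z2int (z : int) : (z%:~R : 'Z_2) = (oddz z)%:R.
Proof.
case: z => n; first by rewrite /oddz /= -pmulrn; exact: Z2nat.
rewrite NegzE mulrNz -pmulrn /oddz abszN /= (Z2nat n.+1) /=.
by case: (odd n); apply/val_inj.
Qed.

Lemma Z2b (b : bool) : nat_of_ord (b%:R : 'Z_2) = b.
Proof. by case: b. Qed.

Lemma Z2neq (z : 'Z_2) : ((z != 0) : nat)%:R = z.
Proof. by case: z => [[|[|m]] Hm] //; apply/val_inj. Qed.

Lemma Z2add (b1 b2 : bool) : ((b1 (+) b2) : nat)%:R = (b1 : nat)%:R + (b2 : nat)%:R :> 'Z_2.
Proof. by case: b1; case: b2; apply/val_inj. Qed.

Lemma redA_add x y : redA (x + y) = redA x + redA y.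
Proof. by apply/rowP => i; rewrite !mxE intrD. Qed.

Lemma redA_2 x : redA (2%:Z *: x) = 0.
Proof.
apply/rowP => i; rewrite !mxE intrM.
have -> : ((2%:Z)%:~R : 'Z_2) = 0 by apply/val_inj.
by rewrite mul0r.
Qed.

Lemma redA_liftA a : redA (liftA a) = a.
Proof. by apply/rowP => i; rewrite !mxE -pmulrn natr_Zp. Qed.

Lemma char2 : (2 \in [char 'Z_2]). Proof. by []. Qed.

Lemma redA_eq x y : redA x = redA y -> exists z, x = y + 2%:Z *: z.
Proof.
move=> H; exists (\row_i (divz (x 0 i - y 0 i) 2)).
apply/rowP => i; move/rowP: H => /(_ i); rewrite !mxE => H.
move: (x 0 i) (y 0 i) H => a b H.
have H2 : (2 %| a - b)%Z by rewrite (dvdz_pcharf char2) intrB H subrr.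
have E := divzK H2.
rewrite mulrC E; ring.
Qed.

Lemma redA_wact rs x y : redA x = redA y -> redA (wact rs x) = redA (wact rs y).
Proof.
move/redA_eq => [z ->]; by rewrite wact_add wact_scale redA_add redA_2 addr0.
Qed.

Lemma Wind_cat s1 s2 a : Wind (s1 ++ s2) a = Wind s1 (Wind s2 a).
Proof.
rewrite /Wind wact_cat; apply: redA_wact; by rewrite redA_liftA.
Qed.

Lemma Wind_nil a : Wind [::] a = a.
Proof. exact: redA_liftA. Qed.

Lemma Wind_inv rs a : rootsP rs -> Wind (rev rs) (Wind rs a) = a.
Proof. by move=> H; rewrite -Wind_cat /Wind wact_cat wact_inv // redA_liftA. Qed.

Lemma Wind_add rs a b : Wind rs (a + b) = Wind rs a + Wind rs b.
Proof.
rewrite /Wind -redA_add -wact_add; apply: redA_wact.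
by rewrite !redA_add !redA_liftA.
Qed.

Definition nq (a : AL) : int := bilP (liftA a) (liftA a).

Lemma Wind_nq rs a : rootsP rs -> (4 %| nq (Wind rs a) - nq a)%Z.
Proof.
move=> H; rewrite /nq /Wind.
set v := wact rs (liftA a).
have [z Ez] : exists z, liftA (redA v) = v + 2%:Z *: z by apply: redA_eq; rewrite redA_liftA.
rewrite Ez -(wact_iso (liftA a) (liftA a) H) -/v.
rewrite !bilP_addl !bilP_addr !bilP_scalel !bilP_scaler (bilP_sym z v).
apply/dvdzP; exists (bilP v z + bilP z z); ring.
Qed.

Lemma eqmodZ (n m : int) :
  eqmod2Z ((2 * n)%:~R / 4%:R) ((2 * m)%:~R / 4%:R) <-> (4 %| n - m)%Z.
Proof.
split.
  move=> [k Hk]; apply/dvdzP; exists k; apply: (@intr_inj rat).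
  rewrite intrB intrM.
  have -> : (n%:~R - m%:~R : rat) = 2 * ((2 * n)%:~R / 4%:R - (2 * m)%:~R / 4%:R).
    rewrite !intrM; field; by [].
  rewrite Hk; have -> : ((4 : int)%:~R : rat) = 4%:R by [].
  ring.
move/dvdzP => [k Hk]; exists k.
have -> : ((2 * n)%:~R / 4%:R - (2 * m)%:~R / 4%:R : rat) = (n - m)%:~R / 2%:R.
  rewrite !intrM intrB; field; by [].
rewrite Hk intrM; have -> : ((4 : int)%:~R : rat) = 4%:R by [].
field; by [].
Qed.

Lemma qLE a : qL a = (2 * nq a)%:~R / 4%:R.
Proof. by []. Qed.

Lemma OA_Wind rs : rootsP rs -> OA (Wind rs).
Proof.
move=> H; split; [|split].
- exists (Wind (rev rs)) => a; first exact: Wind_inv.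
  by have := Wind_inv a (rootsP_rev H); rewrite revK.
- exact: Wind_add.
- by move=> x; rewrite !qLE eqmodZ; apply: Wind_nq.
Qed.

Lemma OA_comp f g : OA f -> OA g -> OA (f \o g).
Proof.
move=> [bf [af qf]] [bg [ag qg]]; split; [|split].
- exact: bij_comp.
- by move=> x y /=; rewrite ag af.
- move=> x /=; move: (qf (g x)) (qg x); rewrite !qLE !eqmodZ => h1 h2.
  by have := rpredD h1 h2; rewrite addrA subrK.
Qed.

Definition sgn (i : nat) : int := if i == 0%N then 1 else -1.
Definition cbil (x y : seq int) : int :=
  foldr (fun i acc => sgn i * (nth 0 x i * nth 0 y i) + acc) 0 (iota 0 8).
Definition fromV (l : seq int) : Pic := \row_(i < 8) nth 0 l i.

Lemma bilP_fromV x y : bilP (fromV x) (fromV y) = cbil x y.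
Proof. by rewrite /bilP !big_ord_recl big_ord0 !mxE /=. Qed.

Definition crefl (r x : seq int) : seq int :=
  mkseq (fun i => nth 0 x i + cbil x r * nth 0 r i) 8.
Lemma refl_fromV r x : refl (fromV r) (fromV x) = fromV (crefl r x).
Proof. by apply/rowP => i; rewrite !mxE nth_mkseq // bilP_fromV. Qed.

Definition cwact (ws : seq (seq int)) x := foldr crefl x ws.
Lemma wact_fromV ws x : wact (map fromV ws) (fromV x) = fromV (cwact ws x).
Proof. by elim: ws => //= r ws IH; rewrite IH refl_fromV. Qed.

Definition b2z (b : bool) : int := (b : nat)%:Z.
Definition fromA (l : seq bool) : AL := \row_(i < 8) (nth false l i : nat)%:R.

Lemma nth_map0 (A B : Type) (f : A -> B) a0 b0 l i :
  f a0 = b0 -> nth b0 (map f l) i = f (nth a0 l i).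
Proof. by move=> H; elim: l i => [|x l IH] [|i] //=. Qed.

Lemma liftA_fromA l : liftA (fromA l) = fromV (map b2z l).
Proof. by apply/rowP => i; rewrite !mxE Z2b (nth_map0 (a0:=false)). Qed.

Lemma redA_fromV v : redA (fromV v) = fromA (map oddz v).
Proof. by apply/rowP => i; rewrite !mxE Z2int (nth_map0 (a0:=0)). Qed.

Definition cW (ws : seq (seq int)) (l : seq bool) := map oddz (cwact ws (map b2z l)).
Lemma Wind_fromA ws l : Wind (map fromV ws) (fromA l) = fromA (cW ws l).
Proof. by rewrite /Wind liftA_fromA wact_fromV redA_fromV. Qed.

Definition nA (l : seq bool) := cbil (map b2z l) (map b2z l).
Lemma nq_fromA l : nq (fromA l) = nA l.
Proof. by rewrite /nq liftA_fromA bilP_fromV. Qed.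

Definition xorL (l1 l2 : seq bool) := mkseq (fun i => nth false l1 i (+) nth false l2 i) 8.
Lemma fromA_xor l1 l2 : fromA (xorL l1 l2) = fromA l1 + fromA l2.
Proof. by apply/rowP => i; rewrite !mxE nth_mkseq // Z2add. Qed.

Definition toA (a : AL) : seq bool := mkseq (fun i => a 0 (inord i) != 0) 8.
Lemma size_toA a : size (toA a) = 8%N. Proof. by rewrite size_mkseq. Qed.
Lemma fromA_toA a : fromA (toA a) = a.
Proof. by apply/rowP => i; rewrite !mxE nth_mkseq // inord_val Z2neq. Qed.

Lemma fromA_inj l1 l2 : size l1 = 8%N -> size l2 = 8%N -> fromA l1 = fromA l2 -> l1 = l2.
Proof.
move=> s1 s2 /rowP H; apply: (@eq_from_nth _ false); first by rewrite s1 s2.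
move=> i; rewrite s1 => Hi; move: (H (Ordinal Hi)); rewrite !mxE /=.
by case: (nth false l1 i); case: (nth false l2 i) => // /(congr1 val).
Qed.

Fixpoint allb (n : nat) (P : seq bool -> bool) : bool :=
  match n with 0%N => P [::] | n'.+1 => allb n' (fun l => P (false :: l)) && allb n' (fun l => P (true :: l)) end.
Lemma allbP n P : allb n P -> forall l, size l = n -> P l.
Proof.
elim: n P => [|n IH] P /=; first by move=> H [].
move=> /andP [H1 H2] [|b l] //= [Hs].
by case: b; [apply: (IH _ H2)|apply: (IH _ H1)].
Qed.

Definition kcL : seq int := [:: -3; 1; 1; 1; 1; 1; 1; 1].
Lemma kcanE : kcan = fromV kcL.
Proof. by apply/rowP => i; rewrite !mxE; case: i => [[|[|[|[|[|[|[|[|?]]]]]]]] ?]. Qed.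

Definition isR (rs : seq Pic) := {in rs, forall r, is_root r}.
Lemma isR_P rs : isR rs -> rootsP rs.
Proof. by move=> H r /H []. Qed.
Lemma isR_cat s1 s2 : isR s1 -> isR s2 -> isR (s1 ++ s2).
Proof. by move=> H1 H2 r; rewrite mem_cat => /orP [] ?; [apply: H1|apply: H2]. Qed.
Lemma isR_rev s : isR s -> isR (rev s).
Proof. by move=> H r; rewrite mem_rev; apply: H. Qed.
Lemma isR_nil : isR [::]. Proof. by []. Qed.

Lemma wact_kcan rs : isR rs -> wact rs kcan = kcan.
Proof.
elim: rs => //= r rs IH H; rewrite IH; last by move=> s Hs; apply: H; rewrite inE Hs orbT.
have [_ Hk] := H r (mem_head _ _).
by rewrite /refl bilP_sym Hk scale0r addr0.
Qed.

Definition rootsL : seq (seq int) := [:: [:: 0; -1; 1; 0; 0; 0; 0; 0];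
  [:: 0; -1; 0; 1; 0; 0; 0; 0];
  [:: 0; 0; -1; 1; 0; 0; 0; 0];
  [:: -1; 1; 1; 1; 0; 0; 0; 0];
  [:: 0; -1; 0; 0; 1; 0; 0; 0];
  [:: 0; 0; -1; 0; 1; 0; 0; 0];
  [:: -1; 1; 1; 0; 1; 0; 0; 0];
  [:: 0; 0; 0; -1; 1; 0; 0; 0];
  [:: -1; 1; 0; 1; 1; 0; 0; 0];
  [:: -1; 0; 1; 1; 1; 0; 0; 0];
  [:: 0; -1; 0; 0; 0; 1; 0; 0];
  [:: 0; 0; -1; 0; 0; 1; 0; 0];
  [:: -1; 1; 1; 0; 0; 1; 0; 0];
  [:: 0; 0; 0; -1; 0; 1; 0; 0];
  [:: -1; 1; 0; 1; 0; 1; 0; 0];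
  [:: -1; 0; 1; 1; 0; 1; 0; 0];
  [:: 0; 0; 0; 0; -1; 1; 0; 0];
  [:: -1; 1; 0; 0; 1; 1; 0; 0];
  [:: -1; 0; 1; 0; 1; 1; 0; 0];
  [:: -1; 0; 0; 1; 1; 1; 0; 0];
  [:: 0; -1; 0; 0; 0; 0; 1; 0];
  [:: 0; 0; -1; 0; 0; 0; 1; 0];
  [:: -1; 1; 1; 0; 0; 0; 1; 0];
  [:: 0; 0; 0; -1; 0; 0; 1; 0];
  [:: -1; 1; 0; 1; 0; 0; 1; 0];
  [:: -1; 0; 1; 1; 0; 0; 1; 0];
  [:: 0; 0; 0; 0; -1; 0; 1; 0];
  [:: -1; 1; 0; 0; 1; 0; 1; 0];
  [:: -1; 0; 1; 0; 1; 0; 1; 0];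
  [:: -1; 0; 0; 1; 1; 0; 1; 0];
  [:: 0; 0; 0; 0; 0; -1; 1; 0];
  [:: -1; 1; 0; 0; 0; 1; 1; 0];
  [:: -1; 0; 1; 0; 0; 1; 1; 0];
  [:: -1; 0; 0; 1; 0; 1; 1; 0];
  [:: -1; 0; 0; 0; 1; 1; 1; 0];
  [:: -2; 1; 1; 1; 1; 1; 1; 0];
  [:: 0; -1; 0; 0; 0; 0; 0; 1];
  [:: 0; 0; -1; 0; 0; 0; 0; 1];
  [:: -1; 1; 1; 0; 0; 0; 0; 1];
  [:: 0; 0; 0; -1; 0; 0; 0; 1];
  [:: -1; 1; 0; 1; 0; 0; 0; 1];
  [:: -1; 0; 1; 1; 0; 0; 0; 1];
  [:: 0; 0; 0; 0; -1; 0; 0; 1];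
  [:: -1; 1; 0; 0; 1; 0; 0; 1];
  [:: -1; 0; 1; 0; 1; 0; 0; 1];
  [:: -1; 0; 0; 1; 1; 0; 0; 1];
  [:: 0; 0; 0; 0; 0; -1; 0; 1];
  [:: -1; 1; 0; 0; 0; 1; 0; 1];
  [:: -1; 0; 1; 0; 0; 1; 0; 1];
  [:: -1; 0; 0; 1; 0; 1; 0; 1];
  [:: -1; 0; 0; 0; 1; 1; 0; 1];
  [:: -2; 1; 1; 1; 1; 1; 0; 1];
  [:: 0; 0; 0; 0; 0; 0; -1; 1];
  [:: -1; 1; 0; 0; 0; 0; 1; 1];
  [:: -1; 0; 1; 0; 0; 0; 1; 1];
  [:: -1; 0; 0; 1; 0; 0; 1; 1];
  [:: -1; 0; 0; 0; 1; 0; 1; 1];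
  [:: -2; 1; 1; 1; 1; 0; 1; 1];
  [:: -1; 0; 0; 0; 0; 1; 1; 1];
  [:: -2; 1; 1; 1; 0; 1; 1; 1];
  [:: -2; 1; 1; 0; 1; 1; 1; 1];
  [:: -2; 1; 0; 1; 1; 1; 1; 1];
  [:: -2; 0; 1; 1; 1; 1; 1; 1]].
Definition Ucodes : seq nat := [:: 13; 116; 250; 43; 141; 161; 148; 130].
Definition lvl0 : seq (nat * seq nat) := [:: (2, [:: 3]);
  (4, [:: 3; 0]);
  (7, [:: 1]);
  (8, [:: 3; 1]);
  (11, [:: 0]);
  (13, [:: ]);
  (16, [:: 9]);
  (19, [:: 7; 0]);
  (21, [:: 7]);
  (25, [:: 5]);
  (32, [:: 15]);
  (35, [:: 13; 0]);
  (37, [:: 13]);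
  (41, [:: 11]);
  (49, [:: 17; 3]);
  (62, [:: 17]);
  (64, [:: 25]);
  (67, [:: 23; 0]);
  (69, [:: 23]);
  (73, [:: 21]);
  (81, [:: 27; 3]);
  (94, [:: 27]);
  (97, [:: 31; 3]);
  (110, [:: 31]);
  (118, [:: 34; 1]);
  (122, [:: 34; 0]);
  (124, [:: 34]);
  (127, [:: 60; 37]);
  (128, [:: 41]);
  (131, [:: 39; 0]);
  (133, [:: 39]);
  (137, [:: 37]);
  (145, [:: 43; 3]);
  (158, [:: 43]);
  (161, [:: 47; 3]);
  (174, [:: 47]);
  (182, [:: 50; 1]);
  (186, [:: 50; 0]);
  (188, [:: 50]);
  (191, [:: 60; 21]);
  (193, [:: 53; 3]);
  (206, [:: 53]);
  (214, [:: 56; 1]);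
  (218, [:: 56; 0]);
  (220, [:: 56]);
  (223, [:: 60; 11]);
  (230, [:: 58; 1]);
  (234, [:: 58; 0]);
  (236, [:: 58]);
  (239, [:: 60; 5]);
  (242, [:: 60; 3; 0]);
  (244, [:: 60; 3]);
  (247, [:: 61]);
  (248, [:: 61; 3]);
  (251, [:: 60]);
  (253, [:: 60; 0])].
Definition lvl1 : seq (nat * seq nat) := [:: (3, [:: 32; 4]);
  (17, [:: 32]);
  (33, [:: 28]);
  (54, [:: 20]);
  (58, [:: 20; 2]);
  (63, [:: 24]);
  (65, [:: 18]);
  (86, [:: 10]);
  (90, [:: 10; 2]);
  (95, [:: 14]);
  (102, [:: 4]);
  (106, [:: 4; 2]);
  (111, [:: 8]);
  (116, [:: ]);
  (120, [:: 2]);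
  (125, [:: 8; 4]);
  (129, [:: 59; 8]);
  (150, [:: 59; 2]);
  (154, [:: 59]);
  (159, [:: 55; 10]);
  (166, [:: 57; 2]);
  (170, [:: 57]);
  (175, [:: 55; 4]);
  (180, [:: 52]);
  (184, [:: 52; 2]);
  (189, [:: 55]);
  (198, [:: 51; 2]);
  (202, [:: 51]);
  (207, [:: 49; 4]);
  (212, [:: 46]);
  (216, [:: 46; 2]);
  (221, [:: 49]);
  (228, [:: 42]);
  (232, [:: 42; 2]);
  (237, [:: 45]);
  (243, [:: 38])].
Definition lvl2 : seq (nat * seq nat) := [:: (6, [:: 62]);
  (15, [:: 40; 35]);
  (24, [:: 40; 33]);
  (40, [:: 40; 29]);
  (72, [:: 40; 19]);
  (113, [:: 40]);
  (132, [:: 35]);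
  (141, [:: 62; 40]);
  (147, [:: 33]);
  (163, [:: 29]);
  (195, [:: 19]);
  (250, [:: ])].
Definition lvl3 : seq (nat * seq nat) := [:: (12, [:: 12]);
  (27, [:: 16]);
  (43, [:: ]);
  (75, [:: 30]);
  (153, [:: 44; 12]);
  (169, [:: 36]);
  (190, [:: 44]);
  (201, [:: 54; 12]);
  (222, [:: 54; 16]);
  (238, [:: 54])].
Definition lvl4 : seq (nat * seq nat) := [:: (40, [:: 48]);
  (141, [:: ])].
Definition lvl5 : seq (nat * seq nat) := [:: (161, [:: ]);
  (182, [:: 6]);
  (230, [:: 22])].
Definition lvl6 : seq (nat * seq nat) := [:: (148, [:: ]);
  (196, [:: 26])].
Definition lvl7 : seq (nat * seq nat) := [:: (130, [:: ])].
Definition lvls := [:: lvl0; lvl1; lvl2; lvl3; lvl4; lvl5; lvl6; lvl7].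
Definition decE : seq nat := [:: 135; 145; 46; 168; 127; 182; 229; 17].
Definition tbC1 : seq (nat * seq nat) := [:: (2, [:: ]);
  (4, [:: 0]);
  (7, [:: 3; 1]);
  (8, [:: 1]);
  (11, [:: 3; 0]);
  (13, [:: 3]);
  (16, [:: 4]);
  (19, [:: 6; 0]);
  (21, [:: 6]);
  (25, [:: 8]);
  (32, [:: 10]);
  (35, [:: 12; 0]);
  (37, [:: 12]);
  (41, [:: 14]);
  (49, [:: 17]);
  (62, [:: 17; 3]);
  (64, [:: 20]);
  (67, [:: 22; 0]);
  (69, [:: 22]);
  (73, [:: 24]);
  (81, [:: 27]);
  (94, [:: 27; 3]);
  (97, [:: 31]);
  (110, [:: 31; 3]);
  (118, [:: 35; 1]);
  (122, [:: 35; 0]);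
  (124, [:: 35]);
  (127, [:: 61; 38]);
  (128, [:: 36]);
  (131, [:: 38; 0]);
  (133, [:: 38]);
  (137, [:: 40]);
  (145, [:: 43]);
  (158, [:: 43; 3]);
  (161, [:: 47]);
  (174, [:: 47; 3]);
  (182, [:: 51; 1]);
  (186, [:: 51; 0]);
  (188, [:: 51]);
  (191, [:: 61; 22]);
  (193, [:: 53]);
  (206, [:: 53; 3]);
  (214, [:: 57; 1]);
  (218, [:: 57; 0]);
  (220, [:: 57]);
  (223, [:: 61; 12]);
  (230, [:: 59; 1]);
  (234, [:: 59; 0]);
  (236, [:: 59]);
  (239, [:: 61; 6]);
  (242, [:: 60; 0]);
  (244, [:: 60]);
  (247, [:: 61; 3]);
  (248, [:: 61]);
  (251, [:: 60; 3]);
  (253, [:: 60; 3; 0])].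
Definition x0C1 : nat := 2.
Definition tbC2 : seq (nat * seq nat) := [:: (1, [:: ]);
  (14, [:: 3]);
  (22, [:: 6]);
  (26, [:: 8]);
  (28, [:: 9]);
  (31, [:: 19; 12]);
  (38, [:: 12]);
  (42, [:: 14]);
  (44, [:: 15]);
  (47, [:: 19; 6]);
  (50, [:: 17]);
  (52, [:: 18]);
  (55, [:: 19; 3]);
  (56, [:: 19]);
  (59, [:: 18; 3]);
  (61, [:: 17; 3]);
  (70, [:: 22]);
  (74, [:: 24]);
  (76, [:: 25]);
  (79, [:: 29; 6]);
  (82, [:: 27]);
  (84, [:: 28]);
  (87, [:: 29; 3]);
  (88, [:: 29]);
  (91, [:: 28; 3]);
  (93, [:: 27; 3]);
  (98, [:: 31]);
  (100, [:: 32]);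
  (103, [:: 33; 3]);
  (104, [:: 33]);
  (107, [:: 32; 3]);
  (109, [:: 31; 3]);
  (112, [:: 34]);
  (115, [:: 32; 6]);
  (117, [:: 31; 6]);
  (121, [:: 31; 8]);
  (134, [:: 38]);
  (138, [:: 40]);
  (140, [:: 41]);
  (143, [:: 45; 6]);
  (146, [:: 43]);
  (148, [:: 44]);
  (151, [:: 45; 3]);
  (152, [:: 45]);
  (155, [:: 44; 3]);
  (157, [:: 43; 3]);
  (162, [:: 47]);
  (164, [:: 48]);
  (167, [:: 49; 3]);
  (168, [:: 49]);
  (171, [:: 48; 3]);
  (173, [:: 47; 3]);
  (176, [:: 50]);
  (179, [:: 48; 6]);
  (181, [:: 47; 6]);
  (185, [:: 47; 8]);
  (194, [:: 53]);
  (196, [:: 54]);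
  (199, [:: 55; 3]);
  (200, [:: 55]);
  (203, [:: 54; 3]);
  (205, [:: 53; 3]);
  (208, [:: 56]);
  (211, [:: 54; 6]);
  (213, [:: 53; 6]);
  (217, [:: 53; 8]);
  (224, [:: 58]);
  (227, [:: 54; 12]);
  (229, [:: 53; 12]);
  (233, [:: 53; 14]);
  (241, [:: 53; 17]);
  (254, [:: 53; 17; 3])].
Definition x0C2 : nat := 1.
Definition tbC3 : seq (nat * seq nat) := [:: (6, [:: ]);
  (10, [:: 2]);
  (12, [:: 1]);
  (15, [:: 8; 4]);
  (18, [:: 5]);
  (20, [:: 4]);
  (23, [:: 8; 1]);
  (24, [:: 5; 1]);
  (27, [:: 9]);
  (29, [:: 8]);
  (34, [:: 11]);
  (36, [:: 10]);
  (39, [:: 14; 1]);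
  (40, [:: 11; 1]);
  (43, [:: 15]);
  (45, [:: 14]);
  (48, [:: 11; 4]);
  (51, [:: 18]);
  (53, [:: 17]);
  (57, [:: 18; 1]);
  (66, [:: 21]);
  (68, [:: 20]);
  (71, [:: 24; 1]);
  (72, [:: 21; 1]);
  (75, [:: 25]);
  (77, [:: 24]);
  (80, [:: 21; 4]);
  (83, [:: 28]);
  (85, [:: 27]);
  (89, [:: 28; 1]);
  (96, [:: 21; 10]);
  (99, [:: 32]);
  (101, [:: 31]);
  (105, [:: 32; 1]);
  (113, [:: 32; 4]);
  (126, [:: 31; 8]);
  (130, [:: 37]);
  (132, [:: 36]);
  (135, [:: 40; 1]);
  (136, [:: 37; 1]);
  (139, [:: 41]);
  (141, [:: 40]);
  (144, [:: 37; 4]);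
  (147, [:: 44]);
  (149, [:: 43]);
  (153, [:: 44; 1]);
  (160, [:: 37; 10]);
  (163, [:: 48]);
  (165, [:: 47]);
  (169, [:: 48; 1]);
  (177, [:: 48; 4]);
  (190, [:: 47; 8]);
  (192, [:: 37; 20]);
  (195, [:: 54]);
  (197, [:: 53]);
  (201, [:: 54; 1]);
  (209, [:: 54; 4]);
  (222, [:: 53; 8]);
  (225, [:: 62; 8]);
  (238, [:: 61; 4]);
  (246, [:: 61; 1]);
  (250, [:: 62]);
  (252, [:: 61])].
Definition x0C3 : nat := 6.
Definition tbC4 : seq (nat * seq nat) := [:: (3, [:: ]);
  (5, [:: 0]);
  (9, [:: 1]);
  (17, [:: 4]);
  (30, [:: 9]);
  (33, [:: 10]);
  (46, [:: 15]);
  (54, [:: 18]);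
  (58, [:: 19]);
  (60, [:: 19; 0]);
  (63, [:: 35; 20]);
  (65, [:: 20]);
  (78, [:: 25]);
  (86, [:: 28]);
  (90, [:: 29]);
  (92, [:: 29; 0]);
  (95, [:: 35; 10]);
  (102, [:: 32]);
  (106, [:: 33]);
  (108, [:: 33; 0]);
  (111, [:: 35; 4]);
  (114, [:: 34]);
  (116, [:: 34; 0]);
  (119, [:: 35; 1]);
  (120, [:: 34; 1]);
  (123, [:: 35; 0]);
  (125, [:: 35]);
  (129, [:: 36]);
  (142, [:: 41]);
  (150, [:: 44]);
  (154, [:: 45]);
  (156, [:: 45; 0]);
  (159, [:: 51; 10]);
  (166, [:: 48]);
  (170, [:: 49]);
  (172, [:: 49; 0]);
  (175, [:: 51; 4]);
  (178, [:: 50]);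
  (180, [:: 50; 0]);
  (183, [:: 51; 1]);
  (184, [:: 50; 1]);
  (187, [:: 51; 0]);
  (189, [:: 51]);
  (198, [:: 54]);
  (202, [:: 55]);
  (204, [:: 55; 0]);
  (207, [:: 57; 4]);
  (210, [:: 56]);
  (212, [:: 56; 0]);
  (215, [:: 57; 1]);
  (216, [:: 56; 1]);
  (219, [:: 57; 0]);
  (221, [:: 57]);
  (226, [:: 58]);
  (228, [:: 58; 0]);
  (231, [:: 59; 1]);
  (232, [:: 58; 1]);
  (235, [:: 59; 0]);
  (237, [:: 59]);
  (240, [:: 58; 4]);
  (243, [:: 60; 0]);
  (245, [:: 60]);
  (249, [:: 61])].
Definition x0C4 : nat := 3.

Definition bitsOf (c : nat) : seq bool := mkseq (fun i => odd (c %/ 2 ^ i)) 8.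
Definition codeOf (l : seq bool) : nat := foldr (fun (b : bool) acc => b + 2 * acc)%N 0%N l.
Definition r0 := nth [::] rootsL 0.
Definition wordR (w : seq nat) := map (nth r0 rootsL) w.
Definition rsOf w := map fromV (wordR w).
Fixpoint look (t : seq (nat * seq nat)) (c : nat) : seq nat :=
  match t with [::] => [::] | (k, w) :: t' => if k == c then w else look t' c end.
Definition Ub (j : nat) := bitsOf (nth 0%N Ucodes j).
Definition dvd4 (z : int) : bool := (4 %| z)%Z.
Definition consb (i : nat) (l : seq bool) :=
  dvd4 (nA l - nA (Ub i)) &&
  all (fun j => dvd4 (nA (xorL l (Ub j)) - nA (xorL (Ub i) (Ub j)))) (iota 0 i).
Definition checkLevel (i : nat) : bool :=
  allb 8 (fun l => consb i l ==>
    (let w := look (nth [::] lvls i) (codeOf l) in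
     all (fun j => cW (wordR w) (Ub j) == Ub j) (iota 0 i) && (cW (wordR w) (Ub i) == l))).
Lemma checkLevels : all checkLevel (iota 0 8).
Proof. vm_compute. reflexivity. Qed.
Lemma roots_ok : all (fun r => (cbil r r == -2) && (cbil r kcL == 0)) rootsL.
Proof. vm_compute. reflexivity. Qed.
Definition zeros := nseq 8 false.
Definition decB (l : seq bool) := foldr xorL zeros [seq bitsOf (nth 0%N decE j) | j <- iota 0 8 & nth false l j].
Definition decomp (l : seq bool) := [seq t <- iota 0 8 | nth false (decB l) t].
Lemma decomp_ok : allb 8 (fun l => foldr xorL zeros (map Ub (decomp l)) == l).
Proof. vm_compute. reflexivity. Qed.
Definition checkTr (m : int) t x0 := allb 8 (fun l => dvd4 (nA l - m) ==> (cW (wordR (look t (codeOf l))) (bitsOf x0) == l)).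
Lemma chk1 : checkTr (-1) tbC1 x0C1. Proof. vm_compute. reflexivity. Qed.
Lemma chk2 : checkTr 1 tbC2 x0C2. Proof. vm_compute. reflexivity. Qed.
Definition checkTw (m : int) t x1l x0 := allb 8 (fun l => dvd4 (nA l - m) ==> ((l == x1l) || (cW (wordR (look t (codeOf l))) (bitsOf x0) == l))).
Definition ones := nseq 8 true.
Lemma chk3 : checkTw 2 tbC3 ones x0C3. Proof. vm_compute. reflexivity. Qed.
Lemma chk4 : checkTw 0 tbC4 zeros x0C4. Proof. vm_compute. reflexivity. Qed.

Lemma r0_in : r0 \in rootsL. Proof. by rewrite /r0 mem_nth. Qed.

Lemma isR_rsOf w : isR (rsOf w).
Proof.
move=> r /mapP [s /mapP [k _ ->] ->].
have Hs : nth r0 rootsL k \in rootsL.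
  case: (ltnP k (size rootsL)) => Hk; first exact: mem_nth.
  by rewrite nth_default.
have /andP [/eqP H1 /eqP H2] := allP roots_ok _ Hs.
by split; rewrite ?kcanE bilP_fromV.
Qed.

Lemma Wind_rsOf w l : Wind (rsOf w) (fromA l) = fromA (cW (wordR w) l).
Proof. exact: Wind_fromA. Qed.

Lemma OA_q f x : OA f -> (4 %| nq (f x) - nq x)%Z.
Proof. by move=> [_ [_ H]]; move: (H x); rewrite !qLE eqmodZ. Qed.

Lemma OA_0 f : OA f -> f 0 = 0.
Proof.
move=> [_ [H _]]; have := H 0 0; rewrite addr0 => E.
by apply: (addrI (f 0)); rewrite -E addr0.
Qed.

Lemma fromA_zeros : fromA zeros = 0.
Proof. by apply/rowP => i; rewrite !mxE nth_nseq; case: ifP. Qed.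

Lemma fromA_foldr ls : fromA (foldr xorL zeros ls) = foldr +%R 0 (map fromA ls).
Proof. by elim: ls => /= [|l ls IH]; [exact: fromA_zeros| rewrite fromA_xor IH]. Qed.

Lemma OA_fix_sum f (xs : seq AL) : OA f -> (forall x, x \in xs -> f x = x) ->
  f (foldr +%R 0 xs) = foldr +%R 0 xs.
Proof.
move=> Hf; elim: xs => /= [|x xs IH] H; first exact: OA_0.
have [_ [Ha _]] := Hf; rewrite Ha H ?mem_head // IH // => y Hy.
by apply: H; rewrite inE Hy orbT.
Qed.

Definition U (j : nat) := fromA (Ub j).

Definition Pch (m : nat) := forall f, OA f -> (forall j, (j < m)%N -> f (U j) = U j) ->
  exists rs, isR rs /\ forall a, f a = Wind rs a.

Lemma Pch8 : Pch 8.
Proof.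
move=> f Hf H; exists [::]; split; first exact: isR_nil.
move=> a; rewrite Wind_nil -{1 2}(fromA_toA a).
have /eqP <- := allbP decomp_ok (size_toA a).
rewrite fromA_foldr -map_comp; apply: OA_fix_sum => // x /mapP [t Ht ->] /=.
apply: H; move: Ht; rewrite mem_filter mem_iota => /andP [_ /andP [_ ]] //.
Qed.

Lemma Pch_step m : (m < 8)%N -> Pch m.+1 -> Pch m.
Proof.
move=> Hm IH f Hf H.
have Hc : checkLevel m by apply: (allP checkLevels); rewrite mem_iota.
set l := toA (f (U m)).
have El : f (U m) = fromA l by rewrite fromA_toA.
have Hcons : consb m l.
  apply/andP; split.
    by have := OA_q (U m) Hf; rewrite El !nq_fromA.
  apply/allP => j; rewrite mem_iota add0n => /andP [_ Hj].
  have := OA_q (U m + U j) Hf.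
  have [_ [Ha _]] := Hf.
  by rewrite Ha El H // /U -!fromA_xor !nq_fromA.
have /andP [/allP Hfix /eqP Hw] := implyP (allbP Hc (size_toA (f (U m)))) Hcons.
set w := look _ _ in Hfix Hw.
set W := rsOf w.
have HW : isR W := @isR_rsOf w.
have WU : forall j, (j < m)%N -> Wind W (U j) = U j.
  move=> j Hj; rewrite /W /U Wind_rsOf; congr fromA; apply/eqP; apply: Hfix.
  by rewrite mem_iota.
have WUm : Wind W (U m) = f (U m) by rewrite /W /U Wind_rsOf Hw fromA_toA.
set g := Wind (rev W) \o f.
have Hg : OA g by apply: OA_comp => //; apply: OA_Wind; apply: isR_P; apply: isR_rev.
have [rs [Hrs Hgrs]] : exists rs, isR rs /\ forall a, g a = Wind rs a.
  apply: IH => // j Hj'; change (Wind (rev W) (f (U j)) = U j).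
  move: Hj'; rewrite ltnS leq_eqVlt => /orP [/eqP ->|Hj].
    by rewrite -WUm Wind_inv //; apply: isR_P.
  by rewrite H // -{1}(WU j Hj) Wind_inv //; apply: isR_P.
exists (W ++ rs); split; first exact: isR_cat.
move=> a; rewrite Wind_cat -Hgrs /g /=.
by have := Wind_inv (f a) (isR_P (isR_rev HW)); rewrite revK.
Qed.

Lemma Pch_all d : forall m, (d + m = 8)%N -> Pch m.
Proof.
elim: d => [|d IHd] m Hdm; first by rewrite add0n in Hdm; rewrite Hdm; exact: Pch8.
apply: Pch_step; first by rewrite -Hdm addSn ltnS leq_addl.
by apply: IHd; rewrite addnS.
Qed.

Lemma surj f : OA f -> exists rs, isR rs /\ forall a, f a = Wind rs a.
Proof. move=> Hf; apply: (Pch_all (d:=8)) => //. Qed.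

Lemma CsetE c (m : int) x : c = (2 * m)%:~R / 4%:R -> (Cset c x <-> (4 %| nq x - m)%Z).
Proof. by move=> ->; rewrite /Cset qLE eqmodZ. Qed.

Lemma nA_toA z : nA (toA z) = nq z.
Proof. by rewrite -nq_fromA fromA_toA. Qed.

Lemma trans_gen c (m : int) t x0 : c = (2 * m)%:~R / 4%:R -> checkTr m t x0 ->
  transitive_on (Cset c).
Proof.
move=> Hc Hch.
have Ex : forall z, (4 %| nq z - m)%Z ->
    Wind (rsOf (look t (codeOf (toA z)))) (fromA (bitsOf x0)) = z.
  move=> z Hz; rewrite Wind_rsOf.
  have H1 : dvd4 (nA (toA z) - m) by rewrite nA_toA.
  have /eqP -> := implyP (allbP Hch (size_toA z)) H1.
  exact: fromA_toA.
move=> x y /(CsetE x Hc) Hx /(CsetE y Hc) Hy.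
set wx := rsOf (look t (codeOf (toA x))).
set wy := rsOf (look t (codeOf (toA y))).
have Rx : isR wx := @isR_rsOf _.
have Ry : isR wy := @isR_rsOf _.
exists (Wind (wy ++ rev wx)); split.
  by apply: OA_Wind; apply: isR_P; apply: isR_cat => //; apply: isR_rev.
by rewrite Wind_cat -{1}(Ex x Hx) Wind_inv ?Ex //; apply: isR_P.
Qed.

Lemma size_bitsOf c : size (bitsOf c) = 8%N. Proof. by rewrite size_mkseq. Qed.

Lemma two_gen c (m : int) t x1l x0 : c = (2 * m)%:~R / 4%:R -> checkTw m t x1l x0 ->
  dvd4 (nA x1l - m) -> dvd4 (nA (bitsOf x0) - m) -> size x1l = 8%N ->
  x1l != bitsOf x0 -> (forall f, OA f -> f (fromA x1l) = fromA x1l) ->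
  exactly_two_orbits (Cset c).
Proof.
move=> Hc Hch H1 H2 Hs Hne Hinv.
exists (fromA x1l), (fromA (bitsOf x0)); split.
- by apply/(CsetE _ Hc); rewrite nq_fromA.
- by apply/(CsetE _ Hc); rewrite nq_fromA.
- move=> [f [Hf E]]; rewrite Hinv // in E.
  by move: (fromA_inj Hs (size_bitsOf x0) E) => E'; rewrite E' eqxx in Hne.
- move=> z /(CsetE z Hc) Hz.
  have H3 : dvd4 (nA (toA z) - m) by rewrite nA_toA.
  have /orP [/eqP E|/eqP E] := implyP (allbP Hch (size_toA z)) H3.
    exists (Wind [::]); split; first by apply: OA_Wind; apply: isR_P; apply: isR_nil.
    by left; rewrite Wind_nil -E fromA_toA.
  exists (Wind (rsOf (look t (codeOf (toA z))))); split.
    by apply: OA_Wind; apply: isR_P; apply: isR_rsOf.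
  by right; rewrite Wind_rsOf E fromA_toA.
Qed.

Lemma inv_ones f : OA f -> f (fromA ones) = fromA ones.
Proof.
move=> /surj [rs [Hrs ->]].
have E : redA (liftA (fromA ones)) = redA kcan.
  by rewrite redA_liftA kcanE redA_fromV.
by rewrite /Wind (redA_wact rs E) wact_kcan // kcanE redA_fromV.
Qed.

Lemma inv_zeros f : OA f -> f (fromA zeros) = fromA zeros.
Proof. by move=> Hf; rewrite fromA_zeros; apply: OA_0. Qed.

Theorem lemma2p6 :
  ((forall rs : seq Pic, {in rs, forall r, is_root r} -> OA (Wind rs)) /\
   (forall f, OA f -> exists rs : seq Pic,
        {in rs, forall r, is_root r} /\ forall a, f a = Wind rs a)) /\
  transitive_on (Cset (- (1 / 2%:R))) /\
  transitive_on (Cset (1 / 2%:R)) /\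
  exactly_two_orbits (Cset 1) /\
  exactly_two_orbits (Cset 0).
Proof.
split; [split|split; [|split; [|split]]].
- by move=> rs Hrs; apply: OA_Wind; apply: isR_P.
- exact: surj.
- by apply: (trans_gen _ chk1); field.
- by apply: (trans_gen _ chk2); field.
- apply: (two_gen _ chk3); last exact: inv_ones; first by field.
  by vm_compute. by vm_compute. by vm_compute. by vm_compute.
- apply: (two_gen _ chk4); last exact: inv_zeros; first by rewrite mulr0 mul0r.
  by vm_compute. by vm_compute. by vm_compute. by vm_compute.
Qed.
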